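(* No distribution $p\in\operatorname{RBM}_{3,2}$ has four modes; that is, there is no $p\in\operatorname{RBM}_{3,2}$ and set $S\subseteq\{0,1\}^3$ of four states such that for every $x\in S$ and every Hamming neighbour $y$ of $x$ one has $p_x>p_y$.
   Context: A distribution of three binary random variables is a $2\times2\times2$ tensor $p=(p_x)_{x\in\{0,1\}^3}$ with nonnegative entries summing to $1$; the set of these is $\Delta_7$. Two states in $\{0,1\}^3$ are Hamming neighbours if they differ in exactly one coordinate. A mode of $p$ is a state $x$ with $p_x>p_y$ for every Hamming neighbour $y$ of $x$. For $a,b,c\in\mathbb{R}^2_{\ge0}$, $a\otimes b\otimes c$ is the tensor with entries $a_ib_jc_k$. $\operatorname{RBM}_{3,2}$ is the set of $p\in\Delta_7$ of the form $p=(a_1\otimes b_1\otimes c_1+d_1\otimes e_1\otimes f_1)*(a_2\otimes b_2\otimes c_2+d_2\otimes e_2\otimes f_2)$ with all vectors in $\mathbb{R}^2_{\ge0}$, where $*$ is the entrywise (Hadamard) product. *)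

(* Defs.v *)
From Stdlib Require Import Reals Lra List.
Import ListNotations.
Open Scope R_scope.

(* A state of three binary variables: an element of {0,1}^3 (false = 0, true = 1). *)
Definition state : Type := (bool * bool * bool)%type.

Definition all_states : list state :=
  [ (false,false,false); (false,false,true); (false,true,false); (false,true,true);
    (true,false,false);  (true,false,true);  (true,true,false);  (true,true,true) ].

Definition hdist (x y : state) : nat :=
  let '(x1, x2, x3) := x in
  let '(y1, y2, y3) := y in
  ((if xorb x1 y1 then 1 else 0) + (if xorb x2 y2 then 1 else 0)
   + (if xorb x3 y3 then 1 else 0))%nat.

Definition hamming_nb (x y : state) : Prop := hdist x y = 1%nat.

Definition tensor := state -> R.

Definition in_Delta7 (p : tensor) : Prop :=
  (forall x, 0 <= p x) /\ fold_right Rplus 0 (map p all_states) = 1.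

Definition is_mode (p : tensor) (x : state) : Prop :=
  forall y, hamming_nb x y -> p x > p y.

Definition vsel (v : R * R) (b : bool) : R := if b then snd v else fst v.
Definition nonneg2 (v : R * R) : Prop := 0 <= fst v /\ 0 <= snd v.

Definition tprod3 (a b c : R * R) : tensor :=
  fun x => let '(i, j, k) := x in vsel a i * vsel b j * vsel c k.

Definition RBM32 (p : tensor) : Prop :=
  in_Delta7 p /\
  exists a1 b1 c1 d1 e1 f1 a2 b2 c2 d2 e2 f2 : R * R,
    nonneg2 a1 /\ nonneg2 b1 /\ nonneg2 c1 /\ nonneg2 d1 /\ nonneg2 e1 /\ nonneg2 f1 /\
    nonneg2 a2 /\ nonneg2 b2 /\ nonneg2 c2 /\ nonneg2 d2 /\ nonneg2 e2 /\ nonneg2 f2 /\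
    forall x, p x = (tprod3 a1 b1 c1 x + tprod3 d1 e1 f1 x)
                    * (tprod3 a2 b2 c2 x + tprod3 d2 e2 f2 x).

(* Main.v *)
Require Import Defs.
From Stdlib Require Import Reals List.
From Stdlib Require Import Lra Psatz Bool.
Import ListNotations.
Open Scope R_scope.

Definition st_eqb (x y : state) : bool :=
  let '(a,b,c) := x in let '(d,e,f) := y in
  Bool.eqb a d && Bool.eqb b e && Bool.eqb c f.

Lemma st_eqb_eq x y : st_eqb x y = true -> x = y.
Proof.
  destruct x as [[a b] c]; destruct y as [[d e] f];
  destruct a, b, c, d, e, f; simpl; intro H; congruence.
Qed.

Definition adjb (x y : state) : bool := Nat.eqb (hdist x y) 1.

Lemma adjb_nb x y : adjb x y = true -> hamming_nb x y /\ hamming_nb y x.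
Proof.
  destruct x as [[a b] c]; destruct y as [[d e] f];
  destruct a, b, c, d, e, f; unfold adjb, hamming_nb; simpl; intro H;
  try discriminate; split; reflexivity.
Qed.

Definition evens : list state :=
  [(false,false,false); (false,true,true); (true,false,true); (true,true,false)].
Definition odds : list state :=
  [(true,true,true); (true,false,false); (false,true,false); (false,false,true)].

Definition bad4 (x1 x2 x3 x4 : state) : bool :=
  st_eqb x1 x2 || st_eqb x1 x3 || st_eqb x1 x4 || st_eqb x2 x3 || st_eqb x2 x4
  || st_eqb x3 x4 || adjb x1 x2 || adjb x1 x3 || adjb x1 x4 || adjb x2 x3
  || adjb x2 x4 || adjb x3 x4.

Definition concl4 (x1 x2 x3 x4 : state) : bool :=
  forallb (fun e => existsb (st_eqb e) [x1;x2;x3;x4]) evens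
  || forallb (fun e => existsb (st_eqb e) [x1;x2;x3;x4]) odds.

Definition check_all : bool :=
  forallb (fun x1 => forallb (fun x2 => forallb (fun x3 => forallb (fun x4 =>
    bad4 x1 x2 x3 x4 || concl4 x1 x2 x3 x4) all_states) all_states) all_states)
    all_states.

Lemma check_all_true : check_all = true.
Proof. vm_compute. reflexivity. Qed.

Lemma all_states_in x : In x all_states.
Proof.
  destruct x as [[a b] c]; destruct a, b, c; simpl; tauto.
Qed.

Lemma check4 x1 x2 x3 x4 : bad4 x1 x2 x3 x4 || concl4 x1 x2 x3 x4 = true.
Proof.
  pose proof check_all_true as H. unfold check_all in H.
  rewrite forallb_forall in H. specialize (H x1 (all_states_in x1)).
  rewrite forallb_forall in H. specialize (H x2 (all_states_in x2)).
  rewrite forallb_forall in H. specialize (H x3 (all_states_in x3)).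
  rewrite forallb_forall in H. specialize (H x4 (all_states_in x4)).
  exact H.
Qed.

Lemma existsb_in e l : existsb (st_eqb e) l = true -> In e l.
Proof.
  intro H. apply existsb_exists in H. destruct H as [y [Hy He]].
  apply st_eqb_eq in He. subst. exact Hy.
Qed.

Definition opp (u v : R) := (u > 0 /\ v < 0) \/ (u < 0 /\ v > 0).

Lemma hadamard_le q00 q01 q10 q11 r00 r01 r10 r11 :
  0 <= q00 -> 0 <= q11 -> 0 <= r00 -> 0 <= r11 ->
  q00 * q11 <= q01 * q10 -> r00 * r11 <= r01 * r10 ->
  (q00*r00)*(q11*r11) <= (q01*r01)*(q10*r10).
Proof.
  intros. replace ((q00*r00)*(q11*r11)) with ((q00*q11)*(r00*r11)) by ring.
  replace ((q01*r01)*(q10*r10)) with ((q01*q10)*(r01*r10)) by ring.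
  apply Rmult_le_compat; try assumption; apply Rmult_le_pos; assumption.
Qed.

Lemma pair_lemma q00 q01 q10 q11 r00 r01 r10 r11
  q00' q01' q10' q11' r00' r01' r10' r11' s0 s1 t0 t1 X Y :
  0 <= q00 -> 0 <= q01 -> 0 <= q10 -> 0 <= q11 ->
  0 <= r00 -> 0 <= r01 -> 0 <= r10 -> 0 <= r11 ->
  0 <= q00' -> 0 <= q01' -> 0 <= q10' -> 0 <= q11' ->
  0 <= r00' -> 0 <= r01' -> 0 <= r10' -> 0 <= r11' ->
  0 <= s0 -> 0 <= s1 -> 0 <= t0 -> 0 <= t1 ->
  q00*q11 - q01*q10 = s0*X -> q00'*q11' - q01'*q10' = s1*X ->
  r00*r11 - r01*r10 = t0*Y -> r00'*r11' - r01'*r10' = t1*Y ->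
  opp ((q00*r00)*(q11*r11) - (q01*r01)*(q10*r10))
      ((q00'*r00')*(q11'*r11') - (q01'*r01')*(q10'*r10')) ->
  X * Y < 0.
Proof.
  intros. 
  assert (Pos : forall a b c d e f g h, 0<=a->0<=b->0<=c->0<=d->0<=e->0<=f->0<=g->0<=h->
     (a*e)*(d*h) - (b*f)*(c*g) > 0 -> a*d - b*c > 0 \/ e*h - f*g > 0).
  { intros a b c d e f g h ? ? ? ? ? ? ? ? Hg.
    destruct (Rle_or_lt (a*d - b*c) 0); [|left; lra].
    destruct (Rle_or_lt (e*h - f*g) 0); [|right; lra].
    exfalso. pose proof (hadamard_le a b c d e f g h) as K. lra. }
  assert (Neg : forall a b c d e f g h, 0<=a->0<=b->0<=c->0<=d->0<=e->0<=f->0<=g->0<=h->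
     (a*e)*(d*h) - (b*f)*(c*g) < 0 -> a*d - b*c < 0 \/ e*h - f*g < 0).
  { intros a b c d e f g h ? ? ? ? ? ? ? ? Hg.
    destruct (Rle_or_lt 0 (a*d - b*c)); [|left; lra].
    destruct (Rle_or_lt 0 (e*h - f*g)); [|right; lra].
    exfalso. pose proof (hadamard_le b a d c f e h g) as K. lra. }
  assert (SP : forall s Z, 0 <= s -> s * Z > 0 -> Z > 0).
  { intros s Z Hs HZ. destruct (Rle_or_lt Z 0); [|lra].
    assert (s * Z <= 0) by nra. lra. }
  assert (SN : forall s Z, 0 <= s -> s * Z < 0 -> Z < 0).
  { intros s Z Hs HZ. destruct (Rle_or_lt 0 Z); [|lra].
    assert (0 <= s * Z) by nra. lra. }
  assert (G1 : forall s Z, 0 <= s -> Z > 0 -> s * Z >= 0) by (intros; nra).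
  assert (G2 : forall s Z, 0 <= s -> Z < 0 -> s * Z <= 0) by (intros; nra).
  match goal with H : opp _ _ |- _ => destruct H as [[A B]|[A B]] end.
  - apply Pos in A; auto. apply Neg in B; auto.
    destruct A as [A|A].
    + assert (HX : X > 0) by (apply (SP s0); lra).
      pose proof (G1 s1 X ltac:(assumption) HX).
      destruct B as [B|B]; [lra|].
      assert (HY : Y < 0) by (apply (SN t1); lra). nra.
    + assert (HY : Y > 0) by (apply (SP t0); lra).
      pose proof (G1 t1 Y ltac:(assumption) HY).
      destruct B as [B|B]; [|lra].
      assert (HX : X < 0) by (apply (SN s1); lra). nra.
  - apply Neg in A; auto. apply Pos in B; auto.
    destruct A as [A|A].
    + assert (HX : X < 0) by (apply (SN s0); lra).
      pose proof (G2 s1 X ltac:(assumption) HX).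
      destruct B as [B|B]; [lra|].
      assert (HY : Y > 0) by (apply (SP t1); lra). nra.
    + assert (HY : Y < 0) by (apply (SN t0); lra).
      pose proof (G2 t1 Y ltac:(assumption) HY).
      destruct B as [B|B]; [|lra].
      assert (HX : X > 0) by (apply (SP s1); lra). nra.
Qed.

Definition Tq (a b c d e f : R*R) : tensor := fun x => tprod3 a b c x + tprod3 d e f x.
Definition dl (u v : R*R) := fst u * snd v - snd u * fst v.

Lemma det12 a b c d e f k :
  Tq a b c d e f (false,false,k) * Tq a b c d e f (true,true,k)
  - Tq a b c d e f (false,true,k) * Tq a b c d e f (true,false,k)
  = (vsel c k * vsel f k) * (dl a d * dl b e).
Proof.
  destruct a, b, c, d, e, f, k; unfold Tq, tprod3, vsel, dl; simpl; ring.
Qed.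

Lemma det13 a b c d e f j :
  Tq a b c d e f (false,j,false) * Tq a b c d e f (true,j,true)
  - Tq a b c d e f (false,j,true) * Tq a b c d e f (true,j,false)
  = (vsel b j * vsel e j) * (dl a d * dl c f).
Proof.
  destruct a, b, c, d, e, f, j; unfold Tq, tprod3, vsel, dl; simpl; ring.
Qed.

Lemma det23 a b c d e f i :
  Tq a b c d e f (i,false,false) * Tq a b c d e f (i,true,true)
  - Tq a b c d e f (i,false,true) * Tq a b c d e f (i,true,false)
  = (vsel a i * vsel d i) * (dl b e * dl c f).
Proof.
  destruct a, b, c, d, e, f, i; unfold Tq, tprod3, vsel, dl; simpl; ring.
Qed.

Lemma vsel_nn u k : nonneg2 u -> 0 <= vsel u k.
Proof. destruct u, k; unfold nonneg2, vsel; simpl; tauto. Qed.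

Lemma Tq_nn a b c d e f x :
  nonneg2 a -> nonneg2 b -> nonneg2 c -> nonneg2 d -> nonneg2 e -> nonneg2 f ->
  0 <= Tq a b c d e f x.
Proof.
  intros. destruct x as [[i j] k]. unfold Tq, tprod3.
  pose proof (vsel_nn a i H). pose proof (vsel_nn b j H0).
  pose proof (vsel_nn c k H1). pose proof (vsel_nn d i H2).
  pose proof (vsel_nn e j H3). pose proof (vsel_nn f k H4).
  apply Rplus_le_le_0_compat; repeat apply Rmult_le_pos; assumption.
Qed.

Definition D12 (p : tensor) k := p (false,false,k) * p (true,true,k) - p (false,true,k) * p (true,false,k).
Definition D13 (p : tensor) j := p (false,j,false) * p (true,j,true) - p (false,j,true) * p (true,j,false).
Definition D23 (p : tensor) i := p (i,false,false) * p (i,true,true) - p (i,false,true) * p (i,true,false).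

Lemma prod_gt a b c d : a > b -> c > d -> 0 <= b -> 0 <= d -> a*c > b*d.
Proof. intros; nra. Qed.

Lemma algebra_part p :
  RBM32 p -> opp (D12 p false) (D12 p true) -> opp (D13 p false) (D13 p true)
  -> opp (D23 p false) (D23 p true) -> False.
Proof.
  intros [_ [a1 [b1 [c1 [d1 [e1 [f1 [a2 [b2 [c2 [d2 [e2 [f2
    [Na1 [Nb1 [Nc1 [Nd1 [Ne1 [Nf1 [Na2 [Nb2 [Nc2 [Nd2 [Ne2 [Nf2 Hp]]]]]]]]]]]]]]]]]]]]]]]]] H12 H13 H23.
  set (Q := Tq a1 b1 c1 d1 e1 f1) in *.
  set (Rr := Tq a2 b2 c2 d2 e2 f2) in *.
  assert (Hp' : forall x, p x = Q x * Rr x) by (intro x; rewrite Hp; reflexivity).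
  assert (NQ : forall x, 0 <= Q x) by (intro; apply Tq_nn; assumption).
  assert (NR : forall x, 0 <= Rr x) by (intro; apply Tq_nn; assumption).
  unfold D12, D13, D23 in *. rewrite !Hp' in H12, H13, H23.
  assert (X12 : dl a1 d1 * dl b1 e1 * (dl a2 d2 * dl b2 e2) < 0).
  { eapply pair_lemma; [ .. | exact H12];
    try apply det12; try apply NQ; try apply NR;
    apply Rmult_le_pos; apply vsel_nn; assumption. }
  assert (X13 : dl a1 d1 * dl c1 f1 * (dl a2 d2 * dl c2 f2) < 0).
  { eapply pair_lemma; [ .. | exact H13];
    try apply det13; try apply NQ; try apply NR;
    apply Rmult_le_pos; apply vsel_nn; assumption. }
  assert (X23 : dl b1 e1 * dl c1 f1 * (dl b2 e2 * dl c2 f2) < 0).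
  { eapply pair_lemma; [ .. | exact H23];
    try apply det23; try apply NQ; try apply NR;
    apply Rmult_le_pos; apply vsel_nn; assumption. }
  set (A := dl a1 d1) in *. set (B := dl b1 e1) in *. set (C := dl c1 f1) in *.
  set (A' := dl a2 d2) in *. set (B' := dl b2 e2) in *. set (C' := dl c2 f2) in *.
  assert (P : 0 < (A*B*(A'*B')) * (A*C*(A'*C'))) by nra.
  assert (P2 : (A*B*(A'*B')) * (A*C*(A'*C')) * (B*C*(B'*C')) < 0).
  { set (U := (A*B*(A'*B')) * (A*C*(A'*C'))) in *. set (V := B*C*(B'*C')) in *.
    assert (0 < U * - V) by (apply Rmult_lt_0_compat; lra).
    replace (U * V) with (- (U * - V)) by ring. lra. }
  replace ((A*B*(A'*B')) * (A*C*(A'*C')) * (B*C*(B'*C'))) with ((A*B*C*A'*B'*C')*(A*B*C*A'*B'*C')) in P2 by ring.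
  pose proof (Rle_0_sqr (A*B*C*A'*B'*C')). unfold Rsqr in *. lra.
Qed.

Lemma nn_of p : RBM32 p -> forall x, 0 <= p x.
Proof. intros [[H _] _]. exact H. Qed.

Ltac solve_side p M Nn :=
  match goal with
  | |- p ?a * p ?b - p ?c * p ?d > 0 =>
    let H1 := fresh in let H2 := fresh in
    assert (H1 : p a > p c) by (apply M; [simpl; tauto | reflexivity]);
    assert (H2 : p b > p d) by (apply M; [simpl; tauto | reflexivity]);
    pose proof (prod_gt (p a) (p c) (p b) (p d) H1 H2 (Nn c) (Nn d)); lra
  | |- p ?a * p ?b - p ?c * p ?d < 0 =>
    let H1 := fresh in let H2 := fresh in
    assert (H1 : p c > p a) by (apply M; [simpl; tauto | reflexivity]);
    assert (H2 : p d > p b) by (apply M; [simpl; tauto | reflexivity]);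
    pose proof (prod_gt (p c) (p a) (p d) (p b) H1 H2 (Nn a) (Nn b)); lra
  end.

Theorem corollary4 :
  ~ (exists (p : tensor) (S : list state),
        RBM32 p /\ NoDup S /\ length S = 4%nat /\
        (forall x, In x S -> forall y, hamming_nb x y -> p x > p y)).
Proof.
  intros [p [S [HR [ND [Hlen Hm]]]]].
  pose proof (nn_of p HR) as Nn.
  destruct S as [|x1 [|x2 [|x3 [|x4 [|x5 S]]]]]; simpl in Hlen; try discriminate.
  pose proof (check4 x1 x2 x3 x4) as H. unfold bad4 in H.
  repeat match goal with H : _ || _ = true |- _ => apply orb_prop in H; destruct H as [H|H] end;
  try (apply st_eqb_eq in H; subst;
       repeat match goal with ND : NoDup (_ :: _) |- _ =>
         apply NoDup_cons_iff in ND; destruct ND as [? ND] end;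
       simpl in *; tauto);
  try (apply adjb_nb in H; destruct H as [H1 H2];
       match type of H1 with hamming_nb ?a ?b =>
         pose proof (Hm a ltac:(simpl; tauto) b H1);
         pose proof (Hm b ltac:(simpl; tauto) a H2) end; lra).
  unfold concl4 in H. apply orb_prop in H.
  destruct H as [H|H]; rewrite forallb_forall in H;
  assert (Hin : forall e, In e _ -> In e [x1;x2;x3;x4])
    by (intros e he; apply existsb_in; exact (H e he));
  clear H;
  assert (M : forall e, In e _ -> forall y, hamming_nb e y -> p e > p y)
    by (intros e he; apply Hm; apply Hin; exact he);
  clear Hin;
  apply (algebra_part p HR); unfold opp, D12, D13, D23;
  repeat split;
  (first [ left; split; solve_side p M Nn | right; split; solve_side p M Nn ]).
Qed.
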